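(* Let $G=(V,E,w)$ be a graph with positive vertex weights and maximum degree $\Delta\ge1$, let $1\le\gamma\le\Delta$, and suppose $G$ is a $\gamma$-stable instance of \texttt{MIS} with maximum weight independent set $I^*$. Then $w(I^* )>\frac{\gamma}{2\Delta}\,w(V)$.
   Context: \texttt{MIS}: given a graph $G=(V,E)$ with weights $w:V\to\mathbb{R}_{>0}$, find an independent set maximizing $w(I)=\sum_{u\in I}w_u$; $w(X)=\sum_{u\in X}w_u$. For $\gamma\ge1$, a $\gamma$-perturbation of $w$ is any $w'$ with $w_u\le w'_u\le\gamma w_u$ for all $u$. The instance is $\gamma$-stable if it has a unique maximum weight independent set $I^*$ and $I^*$ remains the unique maximum weight independent set under every $\gamma$-perturbation of $w$. *)

(* Defs.v *)
From HB Require Import structures.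
From mathcomp Require Import all_boot all_order all_algebra.
Set Implicit Arguments. Unset Strict Implicit. Unset Printing Implicit Defensive.
Import Order.TTheory GRing.Theory Num.Theory.
Local Open Scope ring_scope.

Definition simple_graph (T : finType) (e : rel T) : Prop :=
  symmetric e /\ irreflexive e.

Definition deg (T : finType) (e : rel T) (x : T) : nat := #|[set y | e x y]|.

Definition maxdeg (T : finType) (e : rel T) : nat := (\max_(x : T) deg e x)%N.

Definition independent (T : finType) (e : rel T) (I : {set T}) : bool :=
  [forall x in I, forall y in I, ~~ e x y].

Definition wt (R : realFieldType) (T : finType) (w : T -> R) (X : {set T}) : R :=
  \sum_(u in X) w u.

Definition unique_mwis (R : realFieldType) (T : finType) (e : rel T)
    (w : T -> R) (I : {set T}) : Prop :=
  independent e I /\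
  forall J : {set T}, independent e J -> J != I -> wt w J < wt w I.

Definition perturbation (R : realFieldType) (T : finType) (gamma : R)
    (w w' : T -> R) : Prop :=
  forall u, w u <= w' u /\ w' u <= gamma * w u.

Definition stable_with (R : realFieldType) (T : finType) (e : rel T)
    (w : T -> R) (gamma : R) (I : {set T}) : Prop :=
  unique_mwis e w I /\
  forall w' : T -> R, perturbation gamma w w' -> unique_mwis e w' I.

(* Main.v *)
Require Import Defs.
From HB Require Import structures.
From mathcomp Require Import all_boot all_order all_algebra.
From mathcomp Require Import ring lra.
Import Order.TTheory GRing.Theory Num.Theory.
Local Open Scope ring_scope.

Theorem mainTheorem5 (R : realFieldType) (T : finType) (e : rel T)
    (w : T -> R) (gamma : R) (Istar : {set T}) :
  simple_graph e ->
  (forall u, 0 < w u) ->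
  (1 <= maxdeg e)%N ->
  1 <= gamma -> gamma <= (maxdeg e)%:R ->
  stable_with e w gamma Istar ->
  wt w Istar > gamma / (2 * (maxdeg e)%:R) * wt w [set: T].
Proof.
move=> [esym eirr] wpos Dge1 g1 gD [[indI _] stab].
set I := Istar; set D := maxdeg e.
pose w' := fun x => if x \in I then w x else gamma * w x.
have pert : perturbation gamma w w'.
  move=> u; rewrite /w'; case: (u \in I); split.
  - by [].
  - by rewrite -{1}(mul1r (w u)) ler_pM2r.
  - by rewrite -{1}(mul1r (w u)) ler_pM2r.
  - by [].
have [indI' uniq'] := stab w' pert.
have indIP : forall x y, x \in I -> y \in I -> ~~ e x y.
  move=> x y xI yI; move/forallP: indI => /(_ x); rewrite xI /=.
  by move/forallP => /(_ y); rewrite yI.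
have key : forall u, u \notin I ->
    gamma * w u < \sum_(x in I | e u x) w x.
  move=> u uI.
  pose J := u |: [set x in I | ~~ e u x].
  have indJ : independent e J.
    apply/forallP => x; apply/implyP => xJ; apply/forallP => y; apply/implyP => yJ.
    move: xJ yJ; rewrite !inE.
    case/orP=> [/eqP-> | /andP[xI nx]]; case/orP=> [/eqP-> | /andP[yI ny]].
    - by rewrite eirr.
    - by [].
    - by rewrite esym.
    - exact: indIP.
  have JI : J != I.
    apply/eqP => eJ; move: uI; rewrite -eJ /J !inE eqxx //.
  have := uniq' J indJ JI.
  rewrite /wt /J big_setU1 /=; last by rewrite inE (negbTE uI).
  rewrite /w' (negbTE uI).
  rewrite (bigID (fun x => e u x) (mem I)) /=.
  have -> : \sum_(i in [set x in I | ~~ e u x]) (if i \in I then w i else gamma * w i)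
      = \sum_(i in I | ~~ e u i) w i.
    apply: eq_big => [x|x]; first by rewrite inE.
    by rewrite inE => /andP[-> _].
  have -> : \sum_(i in I | e u i) (if i \in I then w i else gamma * w i)
      = \sum_(i in I | e u i) w i.
    by apply: eq_bigr => x /andP[-> _].
  have -> : \sum_(i in I | ~~ e u i) (if i \in I then w i else gamma * w i)
      = \sum_(i in I | ~~ e u i) w i.
    by apply: eq_bigr => x /andP[-> _].
  rewrite addrC => ?; lra.
have [u0 u0I] : exists u, u \notin I.
  case: (pickP (fun u => u \notin I)) => [u Hu|H]; first by exists u.
  have : D = 0%N.
    rewrite /D /maxdeg; apply: big1 => x _.
    rewrite /deg; apply/eqP; rewrite cards_eq0; apply/eqP/setP => y.
    rewrite !inE; apply/negbTE.
    by apply: indIP; apply/negPn; rewrite H.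
  by move: Dge1; rewrite -/D => /[swap] ->.
have S1 : gamma * \sum_(u in ~: I) w u
    < \sum_(u in ~: I) \sum_(x in I | e u x) w x.
  rewrite mulr_sumr; apply: ltr_sum.
    by apply/hasP; exists u0; rewrite ?mem_index_enum // inE.
  by move=> u; rewrite inE; apply: key.
have S2 : \sum_(u in ~: I) \sum_(x in I | e u x) w x <= D%:R * wt w I.
  rewrite /wt mulr_sumr.
  have -> : \sum_(u in ~: I) \sum_(x in I | e u x) w x
      = \sum_(u in ~: I) \sum_(x in I) (if e u x then w x else 0).
    by apply: eq_bigr => u _; rewrite big_mkcondr.
  rewrite exchange_big /=; apply: ler_sum => x xI.
  apply: (@le_trans _ _ (\sum_(u : T) (if e x u then w x else 0))).
    rewrite [X in _ <= X](bigID (mem (~: I))) /=.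
    apply: ler_wpDr.
      by apply: sumr_ge0 => u _; case: ifP => // _; apply: ltW.
    by apply: ler_sum => u _; rewrite (esym u x).
  rewrite -big_mkcond /= sumr_const -[_ *+ _]mulr_natl ler_pM2r //.
  rewrite ler_nat /D /maxdeg.
  have -> : #|e x| = deg e x by rewrite /deg cardsE.
  exact: (leq_bigmax x).
have S3 : wt w [set: T] = wt w I + \sum_(u in ~: I) w u.
  by rewrite /wt (big_setID I) /= setTI setTD.
have S4 : 0 <= wt w I by rewrite sumr_ge0 // => x _; apply: ltW.
have Dpos : 0 < D%:R :> R by rewrite ltr0n.
rewrite S3 mulrAC ltr_pdivrMr ?mulr_gt0 //.
set A := wt w I; set B := \sum_(u in ~: I) w u.
have : gamma * B < D%:R * A by apply: lt_le_trans S2.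
rewrite -/D in gD.
have : gamma * A <= D%:R * A by rewrite ler_wpM2r.
move=> h1 h2.
have -> : A * (2 * D%:R) = D%:R * A + D%:R * A by rewrite mulrC -mulrA mulr2n mulrDl !mul1r.
by rewrite mulrDr; apply: le_lt_trans (lerD h1 (lexx _)) _; rewrite ltrD2l.
Qed.
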